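(* The adelic absolute value $a\mapsto\|a\|:=|a_\infty|\prod_{p\in\mathcal{P}}p^{-v_p(a)}$ is an upper semi-continuous function on the ring $\mathcal{A}$ of adeles of $\mathbb{Q}$.
   Context: $\mathcal{P}$ is the set of primes. $\mathcal{A}=\mathcal{A}_f\times\mathbb{R}$ with $\mathcal{A}_f=\{(a_p)\in\prod_p\mathbb{Q}_p: a_p\in\mathbb{Z}_p\text{ for almost all }p\}$ in the restricted product topology, and $\mathcal{A}$ has the product topology; $a=((a_p)_p,a_\infty)$. $v_p(a):=v_p(a_p)\in\mathbb{Z}\cup\{\infty\}$ is the $p$-adic valuation, with $p^{-\infty}=0$; the infinite product is interpreted as the limit over finite subsets of primes (it is $0$ if some $a_p=0$ or $v_p(a)>0$ for infinitely many $p$). *)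

(* Defs.v *)
From Stdlib Require Import Reals ZArith List Znumtheory ClassicalEpsilon Rtopology.
Open Scope R_scope.

(** * The p-adic numbers Q_p, modelled by their (Hensel) digit expansions.
    An element of Q_p is x = sum_{n >= N} d_n p^n with digits 0 <= d_n < p,
    represented as the digit function d : Z -> Z (d n = 0 for n below some N).
    This representation is a bijection onto Q_p. *)
Definition is_Qp (p : Z) (x : Z -> Z) : Prop :=
  (forall n, (0 <= x n < p)%Z) /\ exists N, forall n, (n < N)%Z -> x n = 0%Z.

Definition in_Zp (x : Z -> Z) : Prop := forall n, (n < 0)%Z -> x n = 0%Z.

Definition Qp_zero (x : Z -> Z) : Prop := forall n, x n = 0%Z.

(** p-adic valuation (for x <> 0): the least index of a nonzero digit.
    (For x = 0 the value is irrelevant: v_p = +oo is handled in [padic_factor].) *)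
Definition vp (x : Z -> Z) : Z :=
  epsilon (inhabits 0%Z) (fun v => x v <> 0%Z /\ forall n, (n < v)%Z -> x n = 0%Z).

(** p-adic topology: U (a subset of Q_p) is open iff around each of its points it
    contains a ball  { y | y = x mod p^k Z_p }, i.e. { y | digits of y and x agree below k }. *)
Definition open_Qp (p : Z) (U : (Z -> Z) -> Prop) : Prop :=
  forall x, is_Qp p x -> U x ->
    exists k : Z, forall y, is_Qp p y -> (forall n, (n < k)%Z -> y n = x n) -> U y.

(** * Adeles of Q: A = A_f x R.  [af a p] is the p-component (for prime p);
    components at non-primes are fixed to 0 (junk). *)
Record adele := Adele {
  af : Z -> (Z -> Z);
  ainf : R;
  af_Qp : forall p, prime p -> is_Qp p (af p);
  af_junk : forall p, ~ prime p -> forall n, af p n = 0%Z;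
  af_restricted : exists B : Z, forall p, prime p -> (B < p)%Z -> in_Zp (af p)
}.

(** Restricted product topology on A_f, product with the usual topology on R:
    basic opens are  prod_{p in S} U_p x prod_{p notin S} Z_p x W,
    S finite set of primes, U_p open in Q_p, W open in R. *)
Definition in_box (S : list Z) (V : Z -> (Z -> Z) -> Prop) (W : R -> Prop) (b : adele) : Prop :=
  (forall p, In p S -> V p (af b p)) /\
  (forall p, prime p -> ~ In p S -> in_Zp (af b p)) /\
  W (ainf b).

Definition open_adele (U : adele -> Prop) : Prop :=
  forall a, U a ->
    exists (S : list Z) (V : Z -> (Z -> Z) -> Prop) (W : R -> Prop),
      (forall p, In p S -> prime p /\ open_Qp p (V p)) /\
      open_set W /\
      in_box S V W a /\
      (forall b, in_box S V W b -> U b).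

Definition padic_factor (a : adele) (p : Z) : R :=
  if excluded_middle_informative (Qp_zero (af a p)) then 0
  else powerRZ (IZR p) (- vp (af a p)).

Definition partial_prod (a : adele) (S : list Z) : R :=
  fold_right (fun p r => padic_factor a p * r) 1 S.

Definition prod_limit (a : adele) (r : R) : Prop :=
  forall eps, 0 < eps ->
    exists S0 : list Z, (forall p, In p S0 -> prime p) /\
      forall S : list Z, NoDup S -> (forall p, In p S -> prime p) -> incl S0 S ->
        Rabs (partial_prod a S - r) < eps.

Definition adelic_norm (a : adele) : R :=
  Rabs (ainf a) * epsilon (inhabits 0) (prod_limit a).

Definition upper_semicontinuous_adele (f : adele -> R) : Prop :=
  forall c : R, open_adele (fun a => f a < c).

(* Main.v *)
Require Import Defs.
From Stdlib Require Import Reals ZArith List Znumtheory ClassicalEpsilon Rtopology.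
From Stdlib Require Import Lra Lia Classical.
Open Scope R_scope.

Definition fof (p : Z) (x : Z -> Z) : R :=
  if excluded_middle_informative (Qp_zero x) then 0
  else powerRZ (IZR p) (- vp x).

Lemma pf_fof a p : padic_factor a p = fof p (af a p).
Proof. reflexivity. Qed.

Lemma powerRZ_mono (x : R) (k v : Z) : 1 <= x -> (k <= v)%Z ->
  powerRZ x (- v) <= powerRZ x (- k).
Proof.
  intros Hx Hkv.
  replace (- k)%Z with (- v + (v - k))%Z by lia.
  rewrite powerRZ_add by lra.
  assert (H0 : 0 < powerRZ x (- v)) by (apply powerRZ_lt; lra).
  replace (v - k)%Z with (Z.of_nat (Z.to_nat (v - k))) by lia.
  rewrite <- pow_powerRZ.
  assert (1 <= x ^ Z.to_nat (v - k)) by (apply pow_R1_Rle; lra).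
  nra.
Qed.

Lemma vp_exists p x : is_Qp p x -> ~ Qp_zero x ->
  exists v, x v <> 0%Z /\ forall n, (n < v)%Z -> x n = 0%Z.
Proof.
  intros [_ [N HN]] Hnz.
  apply NNPP; intro Hno.
  apply Hnz.
  assert (forall m : nat, forall n, (n < N + Z.of_nat m)%Z -> x n = 0%Z).
  { induction m; intros n Hn.
    - apply HN; lia.
    - destruct (Z.lt_ge_cases n (N + Z.of_nat m)) as [h|h]; [auto|].
      assert (n = N + Z.of_nat m)%Z by lia. subst n.
      destruct (Z.eq_dec (x (N + Z.of_nat m)%Z) 0) as [e|e]; [auto|].
      exfalso; apply Hno; exists (N + Z.of_nat m)%Z; split; auto. }
  intro n. destruct (Z.lt_ge_cases n N) as [h|h]; [apply HN; auto|].
  apply (H (Z.to_nat (n - N + 1))); lia.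
Qed.

Lemma vp_spec p x : is_Qp p x -> ~ Qp_zero x ->
  x (vp x) <> 0%Z /\ forall n, (n < vp x)%Z -> x n = 0%Z.
Proof.
  intros H1 H2. unfold vp. apply epsilon_spec. eapply vp_exists; eauto.
Qed.

Lemma vp_ge p x k : is_Qp p x -> ~ Qp_zero x -> (forall n, (n < k)%Z -> x n = 0%Z) ->
  (k <= vp x)%Z.
Proof.
  intros H1 H2 H3. destruct (vp_spec p x H1 H2) as [A _].
  destruct (Z.lt_ge_cases (vp x) k); [|lia]. exfalso; apply A, H3; auto.
Qed.

Lemma vp_eq p x v : is_Qp p x -> x v <> 0%Z -> (forall n, (n < v)%Z -> x n = 0%Z) ->
  vp x = v.
Proof.
  intros H1 H2 H3.
  assert (Hnz : ~ Qp_zero x) by (intro Z0; apply H2, Z0).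
  destruct (vp_spec p x H1 Hnz) as [A B].
  destruct (Z.lt_total (vp x) v) as [h|[h|h]]; auto.
  - exfalso; apply A, H3; auto.
  - exfalso; apply H2, B; auto.
Qed.

Lemma fof_nonneg p x : prime p -> 0 <= fof p x.
Proof.
  intro Hp. pose proof (prime_ge_2 p Hp). unfold fof.
  destruct excluded_middle_informative; [lra|].
  apply powerRZ_le. apply IZR_lt; lia.
Qed.

Lemma fof_le1 p x : prime p -> is_Qp p x -> in_Zp x -> fof p x <= 1.
Proof.
  intros Hp Hq Hz. pose proof (prime_ge_2 p Hp). unfold fof.
  destruct excluded_middle_informative as [e|e]; [lra|].
  assert (0 <= vp x)%Z by (apply (vp_ge p); auto).
  change 1 with (powerRZ (IZR p) (- 0)).
  apply powerRZ_mono; [|lia]. apply IZR_le; lia.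
Qed.

Lemma fof_ball p x y k : prime p -> is_Qp p x -> is_Qp p y ->
  (forall n, (n < k)%Z -> y n = x n) ->
  fof p y <= fof p x + powerRZ (IZR p) (- k).
Proof.
  intros Hp Hx Hy Hxy. pose proof (prime_ge_2 p Hp).
  assert (Hp1 : 1 <= IZR p) by (apply IZR_le; lia).
  assert (Hpk : 0 < powerRZ (IZR p) (- k)) by (apply powerRZ_lt; lra).
  assert (Hfx : 0 <= fof p x) by (apply fof_nonneg; auto).
  assert (small : ~ Qp_zero y -> (forall n, (n < k)%Z -> x n = 0%Z) ->
            fof p y <= fof p x + powerRZ (IZR p) (- k)).
  { intros Hnz Hz. unfold fof at 1.
    destruct excluded_middle_informative as [ee|ee]; [contradiction|].
    assert (k <= vp y)%Z.
    { apply (vp_ge p); auto. intros n hn. rewrite Hxy; auto. }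
    pose proof (powerRZ_mono (IZR p) k (vp y) Hp1 H0). lra. }
  destruct (excluded_middle_informative (Qp_zero y)) as [zy|zy].
  { unfold fof at 1. destruct excluded_middle_informative; [lra|contradiction]. }
  destruct (excluded_middle_informative (Qp_zero x)) as [zx|zx].
  { apply small; auto. }
  destruct (vp_spec p x Hx zx) as [A B].
  destruct (Z.lt_ge_cases (vp x) k) as [h|h].
  - assert (vp y = vp x).
    { apply (vp_eq p); auto.
      - rewrite Hxy; auto.
      - intros n0 hn. rewrite Hxy by lia. auto. }
    unfold fof. do 2 (destruct excluded_middle_informative; try contradiction).
    rewrite H0. lra.
  - apply small; auto. intros n0 hn; apply B; lia.
Qed.

Definition P (f : Z -> R) (S : list Z) : R := fold_right (fun p r => f p * r) 1 S.

Lemma P_bounds f S : (forall p, In p S -> 0 <= f p) -> 0 <= P f S.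
Proof.
  induction S as [|a S IH]; simpl; intros H; [lra|].
  apply Rmult_le_pos; auto.
Qed.

Lemma P_le1 f S : (forall p, In p S -> 0 <= f p <= 1) -> P f S <= 1.
Proof.
  induction S as [|a S IH]; simpl; intros H; [lra|].
  assert (0 <= P f S) by (apply P_bounds; intros; apply H; auto).
  assert (P f S <= 1) by (apply IH; auto).
  destruct (H a); auto. nra.
Qed.

Lemma P_app f l1 a l2 : P f (l1 ++ a :: l2) = f a * P f (l1 ++ l2).
Proof.
  induction l1; simpl; [reflexivity|]. rewrite IHl1. ring.
Qed.

Lemma P_mono f S S' : NoDup S -> NoDup S' -> incl S S' ->
  (forall p, In p S' -> 0 <= f p) ->
  (forall p, In p S' -> ~ In p S -> f p <= 1) -> P f S' <= P f S.
Proof.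
  revert S'. induction S as [|a S IH]; intros S' N1 N2 Hi H0 H1.
  - simpl. apply P_le1. intros p hp; split; auto.
  - assert (Ha : In a S') by (apply Hi; left; auto).
    destruct (in_split _ _ Ha) as [l1 [l2 E]]. subst S'.
    rewrite P_app. simpl.
    inversion N1; subst.
    pose proof (NoDup_remove_1 _ _ _ N2) as N3.
    pose proof (NoDup_remove_2 _ _ _ N2) as N4.
    assert (Hin : forall x, In x (l1 ++ l2) -> In x (l1 ++ a :: l2)).
    { intros x hx. apply in_app_or in hx. apply in_or_app. simpl. tauto. }
    apply Rmult_le_compat_l. { apply H0. apply in_or_app; right; left; auto. }
    apply IH; auto.
    + intros x hx. assert (In x (l1 ++ a :: l2)) by (apply Hi; right; auto).
      apply in_app_or in H. apply in_or_app. simpl in H.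
      destruct H as [h|[h|h]]; auto. subst; contradiction.
    + intros p hp hn. apply H1. auto. intros [e|e]; [subst; contradiction|auto].
Qed.

Lemma P_cont fx S : (forall p, In p S -> 0 <= fx p) ->
  exists Q, 0 <= Q /\ forall d fy, 0 <= d <= 1 ->
    (forall p, In p S -> 0 <= fy p <= fx p + d) -> P fy S <= P fx S + d * Q.
Proof.
  induction S as [|a S IH]; intros H.
  - exists 0. split; [lra|]. intros; simpl; lra.
  - destruct IH as [Q [HQ HH]]. { intros; apply H; right; auto. }
    assert (HX : 0 <= P fx S) by (apply P_bounds; intros; apply H; right; auto).
    assert (Ha : 0 <= fx a) by (apply H; left; auto).
    exists ((fx a + 1) * Q + P fx S). split; [nra|].
    intros d fy Hd Hy. simpl.
    assert (h1 : P fy S <= P fx S + d * Q) by (apply HH; auto; intros; apply Hy; right; auto).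
    assert (h2 : 0 <= P fy S) by (apply P_bounds; intros; apply Hy; right; auto).
    destruct (Hy a) as [h3 h4]; [left; auto|].
    assert (fy a * P fy S <= (fx a + d) * (P fx S + d * Q)).
    { apply Rmult_le_compat; auto. }
    assert (0 <= d * Q) by (apply Rmult_le_pos; lra).
    assert (d * d * Q <= d * Q).
    { assert (0 <= (1 - d) * (d * Q)) by (apply Rmult_le_pos; lra). nra. }
    nra.
Qed.

Definition covering (a : adele) (S : list Z) : Prop :=
  forall p, prime p -> ~ In p S -> in_Zp (af a p).

Definition good (a : adele) (S : list Z) : Prop :=
  NoDup S /\ (forall p, In p S -> prime p) /\ covering a S.

Lemma covering_exists a : exists C, good a C.
Proof.
  destruct (af_restricted a) as [B HB].
  exists (nodup Z.eq_dec (filter (fun p => if prime_dec p then true else false)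
                         (map Z.of_nat (seq 0 (S (Z.to_nat B)))))).
  split; [apply NoDup_nodup|split].
  - intros p hp. apply nodup_In, filter_In in hp. destruct hp as [_ h].
    destruct prime_dec; auto; discriminate.
  - intros p hp hn. apply HB; auto.
    destruct (Z.lt_ge_cases B p) as [h|h]; auto. exfalso; apply hn.
    pose proof (prime_ge_2 p hp).
    apply nodup_In, filter_In. split.
    + apply in_map_iff. exists (Z.to_nat p). split; [lia|]. apply in_seq. lia.
    + destruct prime_dec; auto.
Qed.

Lemma good_union a S C : good a C -> (forall p, In p S -> prime p) ->
  good a (nodup Z.eq_dec (S ++ C)) /\ incl S (nodup Z.eq_dec (S ++ C)).
Proof.
  intros [N [Hp Hc]] HS. split; [split; [apply NoDup_nodup|split]|].
  - intros p h. apply nodup_In, in_app_or in h. destruct h; auto.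
  - intros p hp hn. apply Hc; auto. intro h; apply hn. apply nodup_In, in_or_app; auto.
  - intros p h. apply nodup_In, in_or_app; auto.
Qed.

Lemma good_incl a S S' : good a S -> NoDup S' -> (forall p, In p S' -> prime p) ->
  incl S S' -> good a S'.
Proof.
  intros [N [Hp Hc]] N' H' Hi. split; [auto|split; auto].
  intros p hp hn. apply Hc; auto.
Qed.

Lemma P_mono_good a S S' : good a S -> NoDup S' -> (forall p, In p S' -> prime p) ->
  incl S S' -> partial_prod a S' <= partial_prod a S.
Proof.
  intros [N [Hp Hc]] N' H' Hi.
  change (P (padic_factor a) S' <= P (padic_factor a) S).
  apply P_mono; auto.
  - intros p hp. rewrite pf_fof. apply fof_nonneg; auto.
  - intros p hp hn. rewrite pf_fof. apply fof_le1; auto. apply af_Qp; auto.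
Qed.

Lemma partial_nonneg a S : (forall p, In p S -> prime p) -> 0 <= partial_prod a S.
Proof.
  intros H. change (0 <= P (padic_factor a) S). apply P_bounds.
  intros p hp. rewrite pf_fof. apply fof_nonneg; auto.
Qed.

Lemma limit_exists a : exists r, prod_limit a r.
Proof.
  destruct (covering_exists a) as [C HC].
  set (E := fun x => exists S, good a S /\ x = - partial_prod a S).
  assert (Hb : bound E).
  { exists 0. intros x [S [[_ [Hp _]] ->]]. pose proof (partial_nonneg a S Hp). lra. }
  assert (Hne : exists x, E x) by (exists (- partial_prod a C); exists C; auto).
  destruct (completeness E Hb Hne) as [m [Hub Hlub]].
  exists (- m). intros eps Heps.
  assert (exists S, good a S /\ partial_prod a S < - m + eps) as [S1 [G1 L1]].
  { apply NNPP; intro Hn. assert (m <= m - eps); [|lra].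
    apply Hlub. intros x [S [G ->]].
    destruct (Rle_lt_dec (- partial_prod a S) (m - eps)); auto.
    exfalso; apply Hn; exists S; split; auto; lra. }
  exists S1. split; [destruct G1 as [_ [h _]]; auto|].
  intros S N HS Hi.
  assert (G : good a S) by (eapply good_incl; eauto).
  assert (- partial_prod a S <= m) by (apply Hub; exists S; auto).
  pose proof (P_mono_good a S1 S G1 N HS Hi).
  apply Rabs_def1; lra.
Qed.

Definition lim a := epsilon (inhabits 0) (prod_limit a).

Lemma lim_spec a : prod_limit a (lim a).
Proof. unfold lim. apply epsilon_spec, limit_exists. Qed.

Lemma lim_le a S : good a S -> lim a <= partial_prod a S.
Proof.
  intros G. destruct (Rle_lt_dec (lim a) (partial_prod a S)) as [h|h]; auto.
  exfalso.
  destruct (lim_spec a (lim a - partial_prod a S)) as [S0 [H0 H1]]; [lra|].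
  destruct (good_union a S0 S G H0) as [G' Hi].
  pose proof (H1 _ (proj1 G') (proj1 (proj2 G')) Hi).
  assert (incl S (nodup Z.eq_dec (S0 ++ S))).
  { intros x hx. apply nodup_In, in_or_app; auto. }
  pose proof (P_mono_good a S _ G (proj1 G') (proj1 (proj2 G')) H2).
  apply Rabs_def2 in H. lra.
Qed.

Lemma pow_ge p n : 2 <= p -> INR n + 1 <= p ^ n.
Proof.
  intros Hp. induction n; [simpl; lra|].
  rewrite S_INR. simpl. assert (0 <= INR n) by apply pos_INR. nra.
Qed.

Theorem lemma3p5 : upper_semicontinuous_adele adelic_norm.
Proof.
  intros c a Hlt. unfold adelic_norm in Hlt. fold (lim a) in Hlt.
  set (A := Rabs (ainf a)) in *.
  assert (HA : 0 <= A) by apply Rabs_pos.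
  destruct (covering_exists a) as [C HC].
  set (l := lim a) in *.
  set (m0 := c - A * l).
  assert (Hm0 : 0 < m0) by (unfold m0; lra).
  destruct (lim_spec a (m0 / (A + 1))) as [S0 [HS0 HL]].
  { apply Rdiv_lt_0_compat; lra. }
  destruct (good_union a S0 C HC HS0) as [GS HiS].
  set (S := nodup Z.eq_dec (S0 ++ C)) in *.
  pose proof (HL S (proj1 GS) (proj1 (proj2 GS)) HiS) as HLS.
  apply Rabs_def2 in HLS. change (lim a) with l in HLS. destruct HLS as [HLS1 HLS2].
  set (Pa := partial_prod a S) in *.
  assert (HPa : A * Pa < c).
  { assert (A * (m0 / (A + 1)) < m0).
    { unfold Rdiv. rewrite <- Rmult_assoc.
      apply (Rmult_lt_reg_r (A + 1)); [lra|]. rewrite Rmult_assoc, Rinv_l by lra. nra. }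
    assert (A * Pa <= A * (l + m0 / (A + 1))) .
    { apply Rmult_le_compat_l; auto. lra. }
    unfold m0 in *. lra. }
  destruct (P_cont (padic_factor a) S) as [Q [HQ HQQ]].
  { intros p hp. rewrite pf_fof. apply fof_nonneg. apply GS; auto. }
  assert (HPa0 : 0 <= Pa) by (apply partial_nonneg, GS).
  set (m := c - A * Pa).
  set (K := A * Q + Pa + Q + 1).
  assert (HK : 0 < K) by (unfold K; nra).
  set (d := Rmin 1 (m / (2 * K))).
  assert (Hd0 : 0 < d).
  { unfold d. apply Rmin_glb_lt; [lra|]. apply Rdiv_lt_0_compat; unfold m; lra. }
  assert (Hd1 : d <= 1) by apply Rmin_l.
  assert (HdK : d * K <= m / 2).
  { assert (d <= m / (2 * K)) by apply Rmin_r.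
    assert (d * K <= m / (2 * K) * K) by (apply Rmult_le_compat_r; lra).
    replace (m / (2 * K) * K) with (m / 2) in H0 by (field; lra). lra. }
  destruct (archimed_cor1 d Hd0) as [N [HN HN0]].
  set (k := Z.of_nat N).
  exists S, (fun p y => forall n, (n < k)%Z -> y n = af a p n),
    (fun t => Rabs t < A + d).
  split; [|split; [|split]].
  - intros p hp. split; [apply GS; auto|].
    intros x _ Hx. exists k. intros y _ Hy n hn. rewrite Hy; auto.
  - intros x hx. assert (0 < A + d - Rabs x) by lra.
    exists (mkposreal _ H). intros y hy. unfold disc in hy. simpl in hy.
    pose proof (Rabs_triang_inv y x). lra.
  - split; [auto|split]. { apply GS. } simpl. unfold A. lra.
  - intros b [Hb1 [Hb2 Hb3]].
    unfold adelic_norm. fold (lim b).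
    assert (Gb : good b S) by (split; [apply GS|split; [apply GS|exact Hb2]]).
    pose proof (lim_le b S Gb) as Hlb.
    assert (HPb : partial_prod b S <= Pa + d * Q).
    { apply HQQ; [lra|]. intros p hp.
      assert (Hp : prime p) by (apply GS; auto).
      rewrite !pf_fof. split; [apply fof_nonneg; auto|].
      pose proof (fof_ball p (af a p) (af b p) k Hp (af_Qp a p Hp) (af_Qp b p Hp) (Hb1 p hp)).
      assert (powerRZ (IZR p) (- k) <= d); [|lra].
      unfold k. rewrite powerRZ_neg', <- pow_powerRZ.
      pose proof (prime_ge_2 p Hp).
      assert (2 <= IZR p) by (apply IZR_le; lia).
      pose proof (pow_ge (IZR p) N H1).
      assert (0 < INR N) by (apply lt_0_INR; lia).
      assert (/ IZR p ^ N <= / INR N); [|lra].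
      apply Rinv_le_contravar; lra. }
    assert (HPb0 : 0 <= partial_prod b S) by (apply partial_nonneg, GS).
    assert (HB0 : 0 <= Rabs (ainf b)) by apply Rabs_pos.
    assert (Rabs (ainf b) * lim b <= Rabs (ainf b) * partial_prod b S)
      by (apply Rmult_le_compat_l; auto).
    assert (Rabs (ainf b) * partial_prod b S <= (A + d) * (Pa + d * Q))
      by (apply Rmult_le_compat; lra).
    assert (0 <= d * Q) by (apply Rmult_le_pos; lra).
    assert (d * d * Q <= d * Q).
    { assert (0 <= (1 - d) * (d * Q)) by (apply Rmult_le_pos; lra). nra. }
    assert ((A + d) * (Pa + d * Q) <= A * Pa + d * K) by (unfold K; nra).
    unfold m in HdK. lra.
Qed.
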